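(* Let $(\mathcal D,\mathcal R)$ be a CLKID$^\omega_N$ pre-proof tree whose root is labelled by the sequent $S$. Normalising it yields a pre-proof tree-set $(\mathcal{MD},\mathcal{MR})$ with the following two properties. (1) $(\mathcal{MD},\mathcal{MR})$ contains a tree whose root is labelled by $S$. (2) In every rb-path $[R,\dots,H,B]$ of $(\mathcal{MD},\mathcal{MR})$, the bud $B$ is the only node labelled by the premise of a $(Subst)$ step. Moreover, a node of such an rb-path is a $(Subst)$-node if and only if it is the IH-node $H$.
   Context: Rules. CLKID$^\omega_N$ is a sequent calculus for first-order logic with inductive definitions. Among its rules, $(Subst)$ infers $\Gamma[\theta]\vdash\Delta[\theta]$ from $\Gamma\vdash\Delta$ for a substitution $\theta$. A $(Subst)$-node is a node whose sequent is the conclusion of a $(Subst)$ step. Pre-proofs. A pre-proof tree $(\mathcal D,\mathcal R)$ is a finite derivation tree. Each terminal node is either a leaf (the conclusion of a 0-premise rule) or a bud, and $\mathcal R$ assigns to each bud a companion node labelled by the same sequent. A pre-proof tree-set $(\mathcal{MD},\mathcal{MR})$ is a finite set of such trees in which companions may lie in any tree. $S(N)$ denotes the label of node $N$. Paths. A path is a list of nodes in which each next node is either labelled by a premise of the rule applied at the current internal node (its child), or is the companion of the current node when that node is a bud. An rb-path is a path $[R,\dots,H,B]$ from the root $R$ of a tree to a bud $B$ of the same tree that contains no other bud; $H$ is called the IH-node. Normalisation. It is the exhaustive application of the following operations. (O1) For an internal non-bud node $N$ labelled by the premise of a $(Subst)$ step: the subtree rooted at $N$ is detached to form a new tree rooted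 at a copy of $N$, and $N$'s original position becomes a bud whose companion is that new root. (O2) For a non-root companion $C$: the subtree rooted at $C$ is detached to form a new tree with root $C^*$ labelled $S(C)$, which becomes the companion of the buds formerly pointing to $C$. At $C$'s original position, a node labelled $S(C)$ becomes the conclusion of a $(Subst)$ step with the empty substitution, whose premise is a new bud with companion $C^*$. (O3) For a bud $B$ whose sequent is the premise of a rule other than $(Subst)$: apply $(Subst)$ with the empty substitution to $S(B)$, and the node labelled by its premise becomes the new bud, with the same companion. *)

(* Defs.v *)
From Stdlib Require Import Relations.
From mathcomp Require Import all_boot.
Set Implicit Arguments. Unset Strict Implicit. Unset Printing Implicit Defensive.

(* CLKID^omega_N is an instance of this interface.                          *)
Record calc := Calc {
  sequent : Type;
  substitution : Type;
  rulename : Type;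
  subst_seq : substitution -> sequent -> sequent;
  empty_subst : substitution;
  subst_seq_empty : forall s, subst_seq empty_subst s = s;
  rule_inst : rulename -> sequent -> seq sequent -> Prop
}.

Inductive rule (L : calc) :=
| RSubst of substitution L
| ROther of rulename L.

Definition rule_ok (L : calc) (r : rule L) (c : sequent L) (ps : seq (sequent L)) : Prop :=
  match r with
  | RSubst th => exists p, ps = [:: p] /\ c = subst_seq th p
  | ROther r' => rule_inst r' c ps
  end.

(* Finite sets of derivation trees, as node-identified graphs.              *)
(*   app n  : Some (r, ch) if rule r is applied at n with premise nodes ch   *)
(*            (ch = [::] : a leaf, i.e. a 0-premise rule);                   *)
(*            None if n is a bud                                              *)
(*   comp n : the companion of n (meaningful for buds)                       *)
Record tset (L : calc) := TSet {
  nodes : seq nat;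
  lab : nat -> sequent L;
  app : nat -> option (rule L * seq nat);
  comp : nat -> nat
}.

Section TreeSets.
Variable L : calc.
Implicit Types (T : tset L).

Definition children T n : seq nat :=
  if app T n is Some (_, ch) then ch else [::].

Definition is_bud T n : Prop := app T n = None.

Definition is_internal T n : Prop := children T n <> [::].

Definition is_parent T p n : Prop := p \in nodes T /\ n \in children T p.

Definition is_root T n : Prop := n \in nodes T /\ ~ (exists p, is_parent T p n).

Definition subst_premise T n : Prop :=
  exists p th ch, p \in nodes T /\ app T p = Some (RSubst th, ch) /\ n \in ch.

Definition other_premise T n : Prop :=
  exists p r ch, p \in nodes T /\ app T p = Some (ROther r, ch) /\ n \in ch.

Definition is_subst_node T n : Prop :=
  exists th ch, app T n = Some (RSubst th, ch).

Definition is_companion T c : Prop :=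
  exists b, b \in nodes T /\ is_bud T b /\ comp T b = c.

Definition preproof_tset T : Prop :=
  [/\ uniq (nodes T),
      (forall n, n \in nodes T ->
         match app T n with
         | Some (r, ch) => [/\ {subset ch <= nodes T}, uniq ch &
                                rule_ok r (lab T n) (map (lab T) ch)]
         | None => comp T n \in nodes T /\ lab T (comp T n) = lab T n
         end),
      (forall p q n, is_parent T p n -> is_parent T q n -> p = q) &
      (exists h : nat -> nat, forall p n, is_parent T p n -> h n < h p)].

Definition descendant T : relation nat := clos_refl_trans nat (is_parent T).

Definition preproof_tree T (rho : nat) : Prop :=
  [/\ preproof_tset T, is_root T rho & forall n, n \in nodes T -> descendant T rho n].

Definition upd (A : Type) (f : nat -> A) (x : nat) (v : A) : nat -> A :=
  fun y => if y == x then v else f y.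

Definition repl (a b : nat) (y : nat) : nat := if y == a then b else y.

Definition app_repl T (a b : nat) : nat -> option (rule L * seq nat) :=
  fun y => match app T y with
           | Some (r, ch) => Some (r, map (repl a b) ch)
           | None => None
           end.

(* (O1): N internal non-bud, premise of a (Subst) step.  The subtree rooted *)
(* at N (keeping N's identity) becomes a new tree; N's former position is   *)
(* taken by a fresh bud b labelled S(N) whose companion is N.               *)
Definition op1 T T' : Prop :=
  exists N b,
    [/\ N \in nodes T, is_internal T N, subst_premise T N,
        b \notin nodes T &
        T' = TSet (b :: nodes T) (upd (lab T) b (lab T N))
                  (upd (app_repl T N b) b None) (upd (comp T) b N)].

(* (O2): C a non-root companion.  The subtree rooted at C (keeping C's      *)
(* identity, so C plays the role of C*, companion of the buds formerly      *)
(* pointing to C) becomes a new tree; C's former position is taken by a     *)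
(* fresh node x labelled S(C), conclusion of (Subst) with the empty          *)
(* substitution, whose premise is a fresh bud b with companion C.           *)
Definition op2 T T' : Prop :=
  exists C x b,
    [/\ C \in nodes T, is_companion T C, ~ is_root T C,
        [/\ x \notin nodes T, b \notin nodes T & x != b] &
        T' = TSet (x :: b :: nodes T)
                  (upd (upd (lab T) x (lab T C)) b (lab T C))
                  (upd (upd (app_repl T C x) x
                      (Some (RSubst (empty_subst L), [:: b]))) b None)
                  (upd (comp T) b C)].

Definition op3 T T' : Prop :=
  exists B b,
    [/\ B \in nodes T, is_bud T B, other_premise T B, b \notin nodes T &
        T' = TSet (b :: nodes T) (upd (lab T) b (lab T B))
                  (upd (upd (app T) B (Some (RSubst (empty_subst L), [:: b]))) b None)
                  (upd (comp T) b (comp T B))].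

Definition norm_step T T' : Prop := op1 T T' \/ op2 T T' \/ op3 T T'.

Definition normal T : Prop := forall T', ~ norm_step T T'.

Definition normalises T0 T : Prop :=
  clos_refl_trans (tset L) norm_step T0 T /\ normal T.

Fixpoint child_chain T (x : nat) (l : seq nat) : Prop :=
  match l with
  | [::] => True
  | y :: l' => is_parent T x y /\ child_chain T y l'
  end.

Definition rb_path T (l : seq nat) (H B : nat) : Prop :=
  exists R mid,
    [/\ l = R :: rcons mid B, H = last R mid, is_root T R,
        child_chain T R (rcons mid B) &
        is_bud T B /\ (forall x, x \in R :: mid -> ~ is_bud T x)].

End TreeSets.

(* Main.v *)
Require Import Defs.
From Stdlib Require Import Relations Classical ClassicalEpsilon.
From mathcomp Require Import all_boot zify.
Set Implicit Arguments. Unset Strict Implicit. Unset Printing Implicit Defensive.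

Definition asb (P : Prop) : bool := if excluded_middle_informative P then true else false.
Lemma asbP (P : Prop) : asb P = true <-> P.
Proof. rewrite /asb; case: excluded_middle_informative => //. Qed.
Lemma asbF (P : Prop) : ~ P -> asb P = false.
Proof. rewrite /asb; case: excluded_middle_informative => //. Qed.
Definition cnt (P : nat -> Prop) (s : seq nat) := count (fun n => asb (P n)) s.

Lemma cnt_le (P Q : nat -> Prop) s : (forall n, n \in s -> Q n -> P n) -> cnt Q s <= cnt P s.
Proof.
elim: s => //= a s IH H.
rewrite /cnt /= -/(cnt Q s) -/(cnt P s).
apply: leq_add; last by apply: IH => n Hn; apply: H; rewrite inE Hn orbT.
rewrite /asb; case: excluded_middle_informative => //= HQ.
by case: excluded_middle_informative => // HP; exfalso; apply: HP; apply: H => //; rewrite inE eqxx.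
Qed.

Lemma cnt_lt (P Q : nat -> Prop) s n0 : (forall n, n \in s -> Q n -> P n) ->
  n0 \in s -> P n0 -> ~ Q n0 -> cnt Q s < cnt P s.
Proof.
elim: s => //= a s IH H Hn0 HP HQ.
rewrite /cnt /= -/(cnt Q s) -/(cnt P s).
have H' : forall n, n \in s -> Q n -> P n by move=> n Hn; apply: H; rewrite inE Hn orbT.
move: Hn0; rewrite inE => /orP [/eqP E|Hs].
  subst a. rewrite (asbF HQ). have /asbP -> := HP. rewrite add0n add1n ltnS. exact: cnt_le.
have IH' := IH H' Hs HP HQ.
suff : asb (Q a) <= asb (P a) by lia.
rewrite /asb; case: excluded_middle_informative => //= HQa.
by case: excluded_middle_informative => // HPa; exfalso; apply: HPa; apply: H => //; rewrite inE eqxx.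
Qed.

Lemma cnt_cons P a s : cnt P (a :: s) = asb (P a) + cnt P s.
Proof. by []. Qed.

Section G.
Variable L : calc.
Implicit Types (T : tset L).

Definition is_other_node T n : Prop := exists r ch, app T n = Some (ROther r, ch).

Lemma subst_premiseE T n : subst_premise T n <-> exists p, is_parent T p n /\ is_subst_node T p.
Proof.
split.
  move=> [p [th [ch [Hp [Ha Hn]]]]]; exists p; split; last by exists th, ch.
  by split => //; rewrite /children Ha.
move=> [p [[Hp Hn] [th [ch Ha]]]]; exists p, th, ch; split => //; split => //.
by move: Hn; rewrite /children Ha.
Qed.

Lemma other_premiseE T n : other_premise T n <-> exists p, is_parent T p n /\ is_other_node T p.
Proof.
split.
  move=> [p [th [ch [Hp [Ha Hn]]]]]; exists p; split; last by exists th, ch.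
  by split => //; rewrite /children Ha.
move=> [p [[Hp Hn] [th [ch Ha]]]]; exists p, th, ch; split => //; split => //.
by move: Hn; rewrite /children Ha.
Qed.

Lemma subst_other_excl T p : is_subst_node T p -> is_other_node T p -> False.
Proof. by move=> [th [ch E]] [r [ch' E']]; rewrite E in E'. Qed.

Lemma parent_kind T p n : is_parent T p n -> is_subst_node T p \/ is_other_node T p.
Proof.
move=> [_]; rewrite /children; case E: (app T p) => [[[th|r] ch]|] //.
  by left; exists th, ch. by right; exists r, ch.
Qed.

Lemma internal_not_bud T n : is_internal T n -> ~ is_bud T n.
Proof. by rewrite /is_internal /is_bud /children => H E; rewrite E in H. Qed.

Lemma parent_internal T p n : is_parent T p n -> is_internal T p.
Proof. by move=> [_ Hn] E; rewrite E in Hn. Qed.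

Section PP.
Variable T : tset L.
Hypothesis PP : preproof_tset T.

Lemma pp_parent_uniq p q n : is_parent T p n -> is_parent T q n -> p = q.
Proof. case: PP => _ _ H _; exact: H. Qed.

Lemma pp_child_in p n : is_parent T p n -> n \in nodes T.
Proof.
case: PP => _ Hl _ _ [Hp Hn]; move: (Hl p Hp) Hn; rewrite /children.
by case: (app T p) => // [[r ch]] [Hs _ _] /Hs.
Qed.

Lemma pp_children_sub p : p \in nodes T -> {subset children T p <= nodes T}.
Proof. by move=> Hp n Hn; apply: (@pp_child_in p). Qed.

Lemma pp_comp_in n : n \in nodes T -> is_bud T n -> Defs.comp T n \in nodes T.
Proof. case: PP => _ Hl _ _ Hn Hb; move: (Hl n Hn); rewrite /is_bud in Hb; rewrite Hb; by case. Qed.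

Lemma pp_parent_neq p n : is_parent T p n -> p <> n.
Proof. case: PP => _ _ _ [h Hh] /Hh H E; subst; by rewrite ltnn in H. Qed.

End PP.

Lemma mem_map_repl a b ch n : b \notin ch ->
  (n \in map (repl a b) ch) <-> (n = b /\ a \in ch) \/ (n <> a /\ n \in ch).
Proof.
move=> Hb; split.
  move/mapP => [y Hy ->]; rewrite /repl; case: eqP => [E|Ne]; [by subst; left | by right].
move=> [[-> Ha]|[Na Hn]]; apply/mapP.
  by exists a => //; rewrite /repl eqxx.
exists n => //; rewrite /repl; case: eqP => // E; by subst.
Qed.

Lemma app_repl_subst T a c y : (exists th ch, app_repl T a c y = Some (RSubst th, ch)) <-> is_subst_node T y.
Proof.
rewrite /app_repl /is_subst_node; case: (app T y) => [[r ch]|]; split => -[th [ch' E]] //.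
  by case: E => -> _; exists th, ch.
by case: E => -> _; exists th, (map (repl a c) ch).
Qed.

Lemma app_repl_other T a c y : (exists th ch, app_repl T a c y = Some (ROther th, ch)) <-> is_other_node T y.
Proof.
rewrite /app_repl /is_other_node; case: (app T y) => [[r ch]|]; split => -[th [ch' E]] //.
  by case: E => -> _; exists th, ch.
by case: E => -> _; exists th, (map (repl a c) ch).
Qed.

Lemma app_repl_none T a c y : app_repl T a c y = None <-> app T y = None.
Proof. by rewrite /app_repl; case: (app T y) => [[]|]. Qed.

Lemma children_repl T a c y : (if app_repl T a c y is Some (_, ch) then ch else [::]) = map (repl a c) (children T y).
Proof. by rewrite /app_repl /children; case: (app T y) => [[]|]. Qed.

End G.

Section Op1.
Variable L : calc.
Variables (T : tset L) (N b : nat).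
Hypothesis PP : preproof_tset T.
Hypothesis HN : N \in nodes T.
Hypothesis Hb : b \notin nodes T.
Definition T1 := TSet (b :: nodes T) (upd (lab T) b (lab T N))
                  (upd (app_repl T N b) b None) (upd (Defs.comp T) b N).

Lemma app1 y : app T1 y = if y == b then None else app_repl T N b y.
Proof. by []. Qed.
Lemma comp1 y : Defs.comp T1 y = if y == b then N else Defs.comp T y.
Proof. by []. Qed.
Lemma lab1' y : lab T1 y = if y == b then lab T N else lab T y.
Proof. by []. Qed.

Lemma nb1 y : y \in nodes T -> y != b.
Proof. move=> Hy; apply/negP => /eqP E; by move: Hb; rewrite -E Hy. Qed.

Lemma hbch1 p : p \in nodes T -> b \notin children T p.
Proof. move=> Hp; apply/negP => /(pp_children_sub PP Hp) H; by move: Hb; rewrite H. Qed.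

Lemma ch1 y : children T1 y = if y == b then [::] else map (repl N b) (children T y).
Proof. rewrite /children /= /upd; case: eqP => // _; exact: children_repl. Qed.

Lemma par1 p n : is_parent T1 p n <-> (n = b /\ is_parent T p N) \/ (n <> N /\ is_parent T p n).
Proof.
split.
  move=> [Hp Hn]; move: Hn; rewrite ch1; case: eqP => // /eqP Npb.
  move: Hp; rewrite inE (negbTE Npb) /= => Hp.
  move/(mem_map_repl _ _ (hbch1 Hp)) => [[-> HN']|[Nn Hn]]; [left|right] => //.
move=> H; have Hp : p \in nodes T by case: H => -[_ [Hp _]].
have Npb := nb1 Hp.
split; first by rewrite inE Hp orbT.
rewrite ch1 (negbTE Npb); apply/(mem_map_repl _ _ (hbch1 Hp)).
by case: H => -[E [_ H]]; [left|right].
Qed.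

Lemma subst1 y : y != b -> is_subst_node T1 y <-> is_subst_node T y.
Proof. move=> Ny; rewrite /is_subst_node /= /upd (negbTE Ny); exact: app_repl_subst. Qed.
Lemma other1 y : y != b -> is_other_node T1 y <-> is_other_node T y.
Proof. move=> Ny; rewrite /is_other_node /= /upd (negbTE Ny); exact: app_repl_other. Qed.
Lemma bud1 y : y != b -> is_bud T1 y <-> is_bud T y.
Proof. move=> Ny; rewrite /is_bud /= /upd (negbTE Ny); exact: app_repl_none. Qed.
Lemma internal1 y : y != b -> is_internal T1 y <-> is_internal T y.
Proof. move=> Ny; rewrite /is_internal ch1 (negbTE Ny); by case: (children T y). Qed.
Lemma budb1 : is_bud T1 b.
Proof. by rewrite /is_bud /= /upd eqxx. Qed.
Lemma nintb1 : ~ is_internal T1 b.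
Proof. by rewrite /is_internal ch1 eqxx. Qed.
Lemma lab1 y : y != b -> lab T1 y = lab T y.
Proof. by move=> Ny; rewrite /= /upd (negbTE Ny). Qed.

Lemma companion1 c : is_companion T1 c <-> c = N \/ is_companion T c.
Proof.
split.
  move=> [b' [Hb' [Hbud Hc]]]; move: Hc; rewrite /= /upd; case: eqP => [E <-|Ne Hc]; first by left.
  right; exists b'; split; last split => //.
    by move: Hb'; rewrite inE => /orP [/eqP|].
  by apply/(bud1 _); [apply/eqP|].
move=> [->|[b' [Hb' [Hbud Hc]]]].
  by exists b; split; [rewrite inE eqxx | split; [exact: budb1 | rewrite /= /upd eqxx]].
have Nb := nb1 Hb'.
exists b'; split; first by rewrite inE Hb' orbT.
by split; [apply/(bud1 Nb) | rewrite /= /upd (negbTE Nb)].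
Qed.

Lemma root1 n : n \in nodes T -> (is_root T1 n <-> n = N \/ is_root T n).
Proof.
move=> Hn; have Nb := nb1 Hn.
have Hn' : n \in nodes T1 by rewrite inE Hn orbT.
case: (eqVneq n N) => [E|Ne].
  subst n; split; first by left.
  move=> _; split => // -[p /par1 [[E _]|[E _]]] //; by rewrite E eqxx in Nb.
split.
  move=> [_ Hr]; right; split => // -[p Hp]; apply: Hr; exists p; apply/par1; right; split => //; exact/eqP.
move=> [E|[_ Hr]]; first by rewrite E eqxx in Ne.
split => // -[p /par1 [[E _]|[_ Hp]]]; first by rewrite E eqxx in Nb.
by apply: Hr; exists p.
Qed.

Lemma pp1 : preproof_tset T1.
Proof.
case: PP => Hu Hl Hpu [h Hh].
split.
- by rewrite /= Hb Hu.
- move=> n; rewrite inE => /orP [/eqP ->|Hn].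
    rewrite app1 comp1 eqxx; split => //; first by rewrite inE HN orbT.
    by rewrite !lab1' eqxx (negbTE (nb1 HN)).
  have Nb := nb1 Hn; move: (Hl n Hn).
  rewrite app1 (negbTE Nb) /app_repl.
  case E: (app T n) => [[r ch]|].
    move=> [Hs Hch Hr].
    have Hbch : b \notin ch by apply/negP => /Hs H; move: Hb; rewrite H.
    split.
    + move=> y /(mem_map_repl _ _ Hbch); rewrite inE.
      move=> [[-> _]|[_ Hy]]; first by rewrite eqxx. by rewrite (Hs _ Hy) orbT.
    + rewrite map_inj_in_uniq // => y z Hy Hz; rewrite /repl.
      have Ny : y <> b by apply/eqP; apply: nb1; apply: Hs.
      have Nz : z <> b by apply/eqP; apply: nb1; apply: Hs.
      case: eqP => Ey; case: eqP => Ez E'; congruence.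
    + rewrite lab1' (negbTE Nb).
      suff -> : [seq lab T1 i | i <- map (repl N b) ch] = map (lab T) ch by [].
      rewrite -map_comp; apply/eq_in_map => y Hy /=.
      rewrite /repl; case: eqP => [->|_]; rewrite /upd ?eqxx //.
      by rewrite (negbTE (nb1 (Hs _ Hy))).
  move=> [Hc Hlc]; have Nc := nb1 Hc; by rewrite comp1 (negbTE Nb) !lab1' (negbTE Nc) (negbTE Nb) inE Hc orbT Hlc.
- move=> p q n /par1 Hp /par1 Hq.
  case: Hp => -[E Hp]; case: Hq => -[E' Hq]; try (by apply: Hpu Hp Hq).
    by subst; have := pp_child_in PP Hq; rewrite (negbTE Hb).
  by subst; have := pp_child_in PP Hp; rewrite (negbTE Hb).
- exists (fun y => if y == b then h N else h y) => p n /par1 [[E Hp]|[E Hp]].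
    subst; rewrite eqxx; have Hpn := (pp_child_in PP Hp).
    have := (nb1 (proj1 Hp)); move/negbTE => ->; exact: Hh.
  rewrite (negbTE (nb1 (proj1 Hp))) (negbTE (nb1 (pp_child_in PP Hp))); exact: Hh.
Qed.

End Op1.

Section Op2.
Variable L : calc.
Variables (T : tset L) (C x b : nat).
Hypothesis PP : preproof_tset T.
Hypothesis HC : C \in nodes T.
Hypothesis Hx : x \notin nodes T.
Hypothesis Hb : b \notin nodes T.
Hypothesis Hxb : x != b.
Definition T2 := TSet (x :: b :: nodes T)
                  (upd (upd (lab T) x (lab T C)) b (lab T C))
                  (upd (upd (app_repl T C x) x
                      (Some (RSubst (empty_subst L), [:: b]))) b None)
                  (upd (Defs.comp T) b C).

Lemma app2 y : app T2 y = if y == b then None else if y == x then Some (RSubst (empty_subst L), [:: b]) else app_repl T C x y.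
Proof. by []. Qed.
Lemma nodes2 : nodes T2 = x :: b :: nodes T.
Proof. by []. Qed.
Lemma comp2 y : Defs.comp T2 y = if y == b then C else Defs.comp T y.
Proof. by []. Qed.
Lemma lab2' y : lab T2 y = if y == b then lab T C else if y == x then lab T C else lab T y.
Proof. by []. Qed.

Lemma nx2 y : y \in nodes T -> y != x.
Proof. move=> Hy; apply/negP => /eqP E; by move: Hx; rewrite -E Hy. Qed.
Lemma nb2 y : y \in nodes T -> y != b.
Proof. move=> Hy; apply/negP => /eqP E; by move: Hb; rewrite -E Hy. Qed.

Lemma hxch2 p : p \in nodes T -> x \notin children T p.
Proof. move=> Hp; apply/negP => /(pp_children_sub PP Hp) H; by move: Hx; rewrite H. Qed.
Lemma hbch2 p : p \in nodes T -> b \notin children T p.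
Proof. move=> Hp; apply/negP => /(pp_children_sub PP Hp) H; by move: Hb; rewrite H. Qed.

Lemma ch2 y : children T2 y = if y == b then [::] else if y == x then [:: b] else map (repl C x) (children T y).
Proof. rewrite /children app2; case: eqP => // _; case: eqP => // _; exact: children_repl. Qed.

Lemma par2 p n : is_parent T2 p n <-> (p = x /\ n = b) \/ (n = x /\ is_parent T p C) \/ (n <> C /\ is_parent T p n).
Proof.
split.
  move=> [Hp Hn]; move: Hn; rewrite ch2; case: eqP => // /eqP Npb.
  case: eqP => [-> |/eqP Npx]; first by rewrite inE => /eqP ->; left.
  move: Hp; rewrite !inE (negbTE Npb) (negbTE Npx) /= => Hp.
  move/(mem_map_repl _ _ (hxch2 Hp)) => [[-> HC']|[Nn Hn]]; right; [left|right] => //.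
move=> [[-> ->]|H].
  split; first by rewrite inE eqxx.
  by rewrite ch2 (negbTE Hxb) eqxx inE.
have Hp : p \in nodes T by case: H => -[_ [Hp _]].
split; first by rewrite !inE Hp !orbT.
rewrite ch2 (negbTE (nb2 Hp)) (negbTE (nx2 Hp)); apply/(mem_map_repl _ _ (hxch2 Hp)).
by case: H => -[E [_ H]]; [left|right].
Qed.

Lemma subst2 y : y \in nodes T -> (is_subst_node T2 y <-> is_subst_node T y).
Proof. move=> Hy; rewrite /is_subst_node app2 (negbTE (nb2 Hy)) (negbTE (nx2 Hy)); exact: app_repl_subst. Qed.
Lemma other2 y : y \in nodes T -> (is_other_node T2 y <-> is_other_node T y).
Proof. move=> Hy; rewrite /is_other_node app2 (negbTE (nb2 Hy)) (negbTE (nx2 Hy)); exact: app_repl_other. Qed.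
Lemma bud2 y : y \in nodes T -> (is_bud T2 y <-> is_bud T y).
Proof. move=> Hy; rewrite /is_bud app2 (negbTE (nb2 Hy)) (negbTE (nx2 Hy)); exact: app_repl_none. Qed.
Lemma internal2 y : y \in nodes T -> (is_internal T2 y <-> is_internal T y).
Proof. move=> Hy; rewrite /is_internal ch2 (negbTE (nb2 Hy)) (negbTE (nx2 Hy)); by case: (children T y). Qed.
Lemma subst2x : is_subst_node T2 x.
Proof. by exists (empty_subst L), [:: b]; rewrite app2 (negbTE Hxb) eqxx. Qed.
Lemma nother2x : ~ is_other_node T2 x.
Proof. by move=> [r [ch]]; rewrite app2 (negbTE Hxb) eqxx. Qed.
Lemma nbud2x : ~ is_bud T2 x.
Proof. by rewrite /is_bud app2 (negbTE Hxb) eqxx. Qed.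
Lemma bud2b : is_bud T2 b.
Proof. by rewrite /is_bud app2 eqxx. Qed.
Lemma nsubst2b : ~ is_subst_node T2 b.
Proof. by move=> [r [ch]]; rewrite app2 eqxx. Qed.
Lemma nother2b : ~ is_other_node T2 b.
Proof. by move=> [r [ch]]; rewrite app2 eqxx. Qed.
Lemma nint2b : ~ is_internal T2 b.
Proof. by rewrite /is_internal ch2 eqxx. Qed.

Lemma companion2 c : is_companion T2 c <-> c = C \/ is_companion T c.
Proof.
split.
  move=> [b' [Hb' [Hbud Hc]]]; move: Hc; rewrite comp2; case: eqP => [E <-|/eqP Ne Hc]; first by left.
  have Nx : b' != x by apply/negP => /eqP E; subst; exact: nbud2x.
  have Hb'' : b' \in nodes T by move: Hb'; rewrite !inE (negbTE Ne) (negbTE Nx).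
  right; exists b'; split => //; split => //; exact/(bud2 Hb'').
move=> [->|[b' [Hb' [Hbud Hc]]]].
  by exists b; split; [rewrite !inE eqxx orbT | split; [exact: bud2b | rewrite comp2 eqxx]].
exists b'; split; first by rewrite !inE Hb' !orbT.
by split; [apply/(bud2 Hb') | rewrite comp2 (negbTE (nb2 Hb'))].
Qed.

Lemma root2 n : n \in nodes T -> (is_root T2 n <-> n = C \/ is_root T n).
Proof.
move=> Hn; have Nb := nb2 Hn; have Nx := nx2 Hn.
have Hn' : n \in nodes T2 by rewrite !inE Hn !orbT.
case: (eqVneq n C) => [E|Ne].
  subst n; split; first by left.
  move=> _; split => // -[p /par2 [[_ E]|[[E _]|[E _]]]] //.
    by rewrite E eqxx in Nb. by rewrite E eqxx in Nx.
split.
  move=> [_ Hr]; right; split => // -[p Hp]; apply: Hr; exists p; apply/par2; right; right; split => //; exact/eqP.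
move=> [E|[_ Hr]]; first by rewrite E eqxx in Ne.
split => // -[p /par2 [[_ E]|[[E _]|[_ Hp]]]].
  by rewrite E eqxx in Nb. by rewrite E eqxx in Nx.
by apply: Hr; exists p.
Qed.

Lemma pp2 : preproof_tset T2.
Proof.
case: PP => Hu Hl Hpu [h Hh].
split.
- by rewrite /= inE negb_or Hxb Hx Hb Hu.
- move=> n; rewrite !inE => /orP [/eqP ->|/orP [/eqP ->|Hn]].
  + rewrite app2 (negbTE Hxb) eqxx; split.
    * by move=> y; rewrite nodes2 !inE => /eqP ->; rewrite eqxx orbT.
    * by [].
    * exists (lab T C); split; first by rewrite /= /upd eqxx.
      by rewrite subst_seq_empty lab2' (negbTE Hxb) eqxx.
  + rewrite app2 comp2 eqxx; split; first by rewrite HC !orbT.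
    by rewrite !lab2' eqxx (negbTE (nb2 HC)) (negbTE (nx2 HC)).
  have Nb := nb2 Hn; have Nx := nx2 Hn; move: (Hl n Hn).
  rewrite app2 (negbTE Nb) (negbTE Nx) /app_repl.
  case E: (app T n) => [[r ch]|].
    move=> [Hs Hch Hr].
    have Hxch : x \notin ch by apply/negP => /Hs H; move: Hx; rewrite H.
    split.
    + move=> y /(mem_map_repl _ _ Hxch); rewrite nodes2 !inE.
      move=> [[-> _]|[_ Hy]]; first by rewrite eqxx. by rewrite (Hs _ Hy) !orbT.
    + rewrite map_inj_in_uniq // => y z Hy Hz; rewrite /repl.
      have Ny : y <> x by apply/eqP; apply: nx2; apply: Hs.
      have Nz : z <> x by apply/eqP; apply: nx2; apply: Hs.
      case: eqP => Ey; case: eqP => Ez E'; congruence.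
    + rewrite lab2' (negbTE Nb) (negbTE Nx).
      suff -> : [seq lab T2 i | i <- map (repl C x) ch] = map (lab T) ch by [].
      rewrite -map_comp; apply/eq_in_map => y Hy /=.
      rewrite /repl; case: eqP => [->|_]; rewrite /upd ?eqxx.
        by case: (x == b).
      by rewrite (negbTE (nb2 (Hs _ Hy))) (negbTE (nx2 (Hs _ Hy))).
  move=> [Hc Hlc]; rewrite comp2 (negbTE Nb) !lab2' (negbTE Nb) (negbTE Nx).
  by rewrite (negbTE (nb2 Hc)) (negbTE (nx2 Hc)) Hc !orbT Hlc.
- move=> p q n /par2 Hp /par2 Hq.
  have nbC : b <> C by move=> E; move: Hb; rewrite E HC.
  case: Hp => [[Ep En]|[[En Hp]|[En Hp]]]; case: Hq => [[Eq En']|[[En' Hq]|[En' Hq]]];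
    subst; try done; try (by apply: Hpu Hp Hq);
    try (by have := pp_child_in PP Hp; rewrite (negbTE Hb));
    try (by have := pp_child_in PP Hq; rewrite (negbTE Hb));
    try (by have := pp_child_in PP Hp; rewrite (negbTE Hx));
    try (by have := pp_child_in PP Hq; rewrite (negbTE Hx));
    try (by move/eqP: Hxb).
- exists (fun y => if y == b then 0 else if y == x then (h C).+1 else (h y).+1).
  move=> p n /par2 [[-> ->]|[[-> Hp]|[_ Hp]]].
  + by rewrite eq_sym (negbTE Hxb) eqxx eqxx.
  + have Hp' := proj1 Hp.
    rewrite (negbTE Hxb) eqxx (negbTE (nb2 Hp')) (negbTE (nx2 Hp')) ltnS; exact: Hh.
  + have Hp' := proj1 Hp; have Hn' := pp_child_in PP Hp.
    rewrite (negbTE (nb2 Hp')) (negbTE (nx2 Hp')) (negbTE (nb2 Hn')) (negbTE (nx2 Hn')) ltnS; exact: Hh.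
Qed.

End Op2.

Section Op3.
Variable L : calc.
Variables (T : tset L) (B b : nat).
Hypothesis PP : preproof_tset T.
Hypothesis HB : B \in nodes T.
Hypothesis HBb : is_bud T B.
Hypothesis Hb : b \notin nodes T.
Definition T3 := TSet (b :: nodes T) (upd (lab T) b (lab T B))
                  (upd (upd (app T) B (Some (RSubst (empty_subst L), [:: b]))) b None)
                  (upd (Defs.comp T) b (Defs.comp T B)).

Lemma app3 y : app T3 y = if y == b then None else if y == B then Some (RSubst (empty_subst L), [:: b]) else app T y.
Proof. by []. Qed.
Lemma comp3 y : Defs.comp T3 y = if y == b then Defs.comp T B else Defs.comp T y.
Proof. by []. Qed.
Lemma lab3' y : lab T3 y = if y == b then lab T B else lab T y.
Proof. by []. Qed.
Lemma nb3 y : y \in nodes T -> y != b.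
Proof. move=> Hy; apply/negP => /eqP E; by move: Hb; rewrite -E Hy. Qed.
Lemma chB3 : children T B = [::].
Proof. by rewrite /children HBb. Qed.
Lemma nBp3 p n : is_parent T p n -> p != B.
Proof. move=> [_ Hn]; apply/negP => /eqP E; by move: Hn; rewrite E chB3. Qed.

Lemma ch3 y : children T3 y = if y == b then [::] else if y == B then [:: b] else children T y.
Proof. rewrite /children app3; case: eqP => // _; case: eqP => //. Qed.

Lemma par3 p n : is_parent T3 p n <-> (p = B /\ n = b) \/ is_parent T p n.
Proof.
have NBb := nb3 HB.
split.
  move=> [Hp Hn]; move: Hn; rewrite ch3; case: eqP => // /eqP Npb.
  case: eqP => [-> |/eqP NpB]; first by rewrite inE => /eqP ->; left.
  move: Hp; rewrite inE (negbTE Npb) /= => Hp Hn; by right.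
move=> [[-> ->]|H].
  split; first by rewrite inE HB orbT.
  by rewrite ch3 (negbTE NBb) eqxx inE.
have Hp := proj1 H.
split; first by rewrite inE Hp orbT.
by rewrite ch3 (negbTE (nb3 Hp)) (negbTE (nBp3 H)); case: H.
Qed.

Lemma subst3 y : y \in nodes T -> y != B -> (is_subst_node T3 y <-> is_subst_node T y).
Proof. by move=> Hy NB; rewrite /is_subst_node app3 (negbTE (nb3 Hy)) (negbTE NB). Qed.
Lemma other3 y : y \in nodes T -> y != B -> (is_other_node T3 y <-> is_other_node T y).
Proof. by move=> Hy NB; rewrite /is_other_node app3 (negbTE (nb3 Hy)) (negbTE NB). Qed.
Lemma bud3 y : y \in nodes T -> y != B -> (is_bud T3 y <-> is_bud T y).
Proof. by move=> Hy NB; rewrite /is_bud app3 (negbTE (nb3 Hy)) (negbTE NB). Qed.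
Lemma internal3 y : y \in nodes T -> y != B -> (is_internal T3 y <-> is_internal T y).
Proof. by move=> Hy NB; rewrite /is_internal ch3 (negbTE (nb3 Hy)) (negbTE NB). Qed.
Lemma nbud3B : ~ is_bud T3 B.
Proof. by rewrite /is_bud app3 (negbTE (nb3 HB)) eqxx. Qed.
Lemma subst3B : is_subst_node T3 B.
Proof. by exists (empty_subst L), [:: b]; rewrite app3 (negbTE (nb3 HB)) eqxx. Qed.
Lemma nother3B : ~ is_other_node T3 B.
Proof. by move=> [r [ch]]; rewrite app3 (negbTE (nb3 HB)) eqxx. Qed.
Lemma bud3b : is_bud T3 b.
Proof. by rewrite /is_bud app3 eqxx. Qed.
Lemma nsubst3b : ~ is_subst_node T3 b.
Proof. by move=> [r [ch]]; rewrite app3 eqxx. Qed.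
Lemma nother3b : ~ is_other_node T3 b.
Proof. by move=> [r [ch]]; rewrite app3 eqxx. Qed.
Lemma nint3b : ~ is_internal T3 b.
Proof. by rewrite /is_internal ch3 eqxx. Qed.

Lemma companion3 c : is_companion T3 c <-> is_companion T c.
Proof.
split.
  move=> [b' [Hb' [Hbud Hc]]]; move: Hc; rewrite comp3; case: eqP => [E <-|/eqP Ne Hc].
    by exists B.
  have Hb'' : b' \in nodes T by move: Hb'; rewrite inE (negbTE Ne).
  have NB : b' != B by apply/negP => /eqP E; subst; exact: nbud3B.
  exists b'; split => //; split => //; exact/(bud3 Hb'' NB).
move=> [b' [Hb' [Hbud Hc]]].
case: (eqVneq b' B) => [E|NB].
  subst; exists b; split; first by rewrite inE eqxx.
  by split; [exact: bud3b | rewrite comp3 eqxx].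
exists b'; split; first by rewrite inE Hb' orbT.
by split; [apply/(bud3 Hb' NB) | rewrite comp3 (negbTE (nb3 Hb'))].
Qed.

Lemma root3 n : n \in nodes T -> (is_root T3 n <-> is_root T n).
Proof.
move=> Hn; have Nb := nb3 Hn.
split.
  move=> [_ Hr]; split => // -[p Hp]; apply: Hr; exists p; apply/par3; by right.
move=> [_ Hr]; split; first by rewrite inE Hn orbT.
move=> [p /par3 [[_ E]|Hp]]; first by rewrite E eqxx in Nb.
by apply: Hr; exists p.
Qed.

Lemma pp3 : preproof_tset T3.
Proof.
case: PP => Hu Hl Hpu [h Hh].
have NBb := nb3 HB.
split.
- by rewrite /= Hb Hu.
- move=> n; rewrite inE => /orP [/eqP ->|Hn].
    rewrite app3 comp3 eqxx; split; first by rewrite inE (pp_comp_in PP HB HBb) orbT.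
    rewrite !lab3' eqxx (negbTE (nb3 (pp_comp_in PP HB HBb))).
    by move: (Hl B HB); rewrite HBb => -[].
  have Nb := nb3 Hn; rewrite app3 (negbTE Nb).
  case: (eqVneq n B) => [E|NB].
    subst; split.
    * by move=> y; rewrite inE => /eqP ->; rewrite inE eqxx.
    * by [].
    * exists (lab T B); split; first by rewrite /= /upd eqxx.
      by rewrite subst_seq_empty lab3' (negbTE NBb).
  move: (Hl n Hn).
  case E: (app T n) => [[r ch]|].
    move=> [Hs Hch Hr]; split => //.
    + by move=> y Hy; rewrite inE (Hs _ Hy) orbT.
    + rewrite lab3' (negbTE Nb).
      suff -> : [seq lab T3 i | i <- ch] = map (lab T) ch by [].
      apply/eq_in_map => y Hy /=.
      by rewrite /upd (negbTE (nb3 (Hs _ Hy))).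
  move=> [Hc Hlc]; rewrite comp3 (negbTE Nb) !lab3' (negbTE Nb).
  by rewrite (negbTE (nb3 Hc)) inE Hc orbT Hlc.
- move=> p q n /par3 Hp /par3 Hq.
  case: Hp => [[Ep En]|Hp]; case: Hq => [[Eq En']|Hq]; subst; try done.
    by have := pp_child_in PP Hq; rewrite (negbTE Hb).
  by have := pp_child_in PP Hp; rewrite (negbTE Hb).
  by apply: Hpu Hp Hq.
- exists (fun y => if y == b then 0 else (h y).+1).
  move=> p n /par3 [[-> ->]|Hp].
    by rewrite eqxx (negbTE NBb).
  have Hp' := proj1 Hp; have Hn' := pp_child_in PP Hp.
  rewrite (negbTE (nb3 Hp')) (negbTE (nb3 Hn')) ltnS; exact: Hh.
Qed.

End Op3.

Section Measure.
Variable L : calc.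
Implicit Types (T : tset L).

Definition Aop T n := is_internal T n /\ subst_premise T n.
Definition C2op T n := is_companion T n /\ ~ is_root T n.
Definition C3op T n := is_bud T n /\ other_premise T n.
Definition M T := 2 * cnt (C2op T) (nodes T) + cnt (C3op T) (nodes T) + cnt (Aop T) (nodes T).

Lemma comp_notin T y : preproof_tset T -> y \notin nodes T -> is_companion T y -> False.
Proof.
move=> PP Hy [b' [Hb' [Hbud Hc]]]; have := pp_comp_in PP Hb' Hbud; by rewrite Hc (negbTE Hy).
Qed.

Lemma notin_child T p y : preproof_tset T -> y \notin nodes T -> is_parent T p y -> False.
Proof. move=> PP Hy Hp; have := pp_child_in PP Hp; by rewrite (negbTE Hy). Qed.

Lemma asb_le1 P : asb P <= 1.
Proof. by case: (asb P). Qed.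

Lemma op1_M T N b : preproof_tset T -> N \in nodes T -> b \notin nodes T ->
  is_internal T N -> subst_premise T N -> M (T1 T N b) < M T.
Proof.
move=> PP HN Hb HiN HsN.
have Nb := nb1 Hb.
rewrite /M; have -> : nodes (T1 T N b) = b :: nodes T by [].
rewrite !cnt_cons.
have E1 : asb (C2op (T1 T N b) b) = false.
  apply: asbF => -[/(companion1 N Hb) [E|Hc] _].
    by subst; rewrite HN in Hb.
  exact: (comp_notin PP Hb Hc).
have E2 : asb (C3op (T1 T N b) b) = false.
  apply: asbF => -[_ /other_premiseE [p [/(par1 N PP Hb) H Ho]]].
  case: H => [[_ Hp]|[_ Hp]]; last first.
    exact: (notin_child PP Hb Hp).
  have Hpo : is_other_node T p := proj1 (other1 _ _ (Nb p (proj1 Hp))) Ho.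
  move/subst_premiseE: HsN => [q [Hq Hqs]].
  have := pp_parent_uniq PP Hp Hq => E; subst; exact: subst_other_excl Hqs Hpo.
have E3 : asb (Aop (T1 T N b) b) = false by apply: asbF => -[/nintb1].
rewrite E1 E2 E3 !add0n.
have L2 : cnt (C2op (T1 T N b)) (nodes T) <= cnt (C2op T) (nodes T).
  apply: cnt_le => n Hn [/(companion1 N Hb) Hc Hr].
  case: Hc => [E|Hc].
    by subst; exfalso; apply: Hr; apply: (proj2 (root1 N PP Hb HN)); left.
  split => // Hr'; apply: Hr; apply: (proj2 (root1 N PP Hb Hn)); by right.
have L3 : cnt (C3op (T1 T N b)) (nodes T) <= cnt (C3op T) (nodes T).
  apply: cnt_le => n Hn [/(bud1 _ _ (Nb n Hn)) Hbud /other_premiseE [p [/(par1 N PP Hb) H Ho]]].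
  split => //; apply/other_premiseE.
  case: H => -[E Hp]; first by subst; rewrite Hn in Hb.
  by exists p; split => //; exact: (proj1 (other1 _ _ (Nb p (proj1 Hp))) Ho).
have L1 : cnt (Aop (T1 T N b)) (nodes T) < cnt (Aop T) (nodes T).
  apply: (@cnt_lt _ _ _ N) => //.
    move=> n Hn [/(internal1 _ _ (Nb n Hn)) Hi /subst_premiseE [p [/(par1 N PP Hb) H Hs]]].
    split => //; apply/subst_premiseE.
    case: H => -[E Hp]; first by subst; rewrite Hn in Hb.
    by exists p; split => //; exact: (proj1 (subst1 _ _ (Nb p (proj1 Hp))) Hs).
  move=> [_ /subst_premiseE [p [/(par1 N PP Hb) H _]]].
  case: H => -[E _] //; by subst; rewrite HN in Hb.
lia.
Qed.

End Measure.

Section Measure2.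
Variable L : calc.
Implicit Types (T : tset L).

Lemma op2_M T C x b : preproof_tset T -> C \in nodes T -> x \notin nodes T -> b \notin nodes T -> x != b ->
  is_companion T C -> ~ is_root T C -> M (T2 T C x b) < M T.
Proof.
move=> PP HC Hx Hb Hxb HcC HrC.
have Nb := nb2 Hb. have Nx := nx2 Hx.
rewrite /M; have -> : nodes (T2 T C x b) = x :: b :: nodes T by [].
rewrite !cnt_cons.
set T' := T2 T C x b.
have Ex2 : asb (C2op T' x) = false.
  apply: asbF => -[/(companion2 C Hx Hb Hxb) [E|Hc] _].
    by move: Hx; rewrite E HC.
  exact: (comp_notin PP Hx Hc).
have Eb2 : asb (C2op T' b) = false.
  apply: asbF => -[/(companion2 C Hx Hb Hxb) [E|Hc] _].
    by move: Hb; rewrite E HC.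
  exact: (comp_notin PP Hb Hc).
have Ex3 : asb (C3op T' x) = false by apply: asbF => -[/(nbud2x Hxb)].
have Eb3 : asb (C3op T' b) = false.
  apply: asbF => -[_ /other_premiseE [p [/(par2 C PP Hx Hb Hxb) H Ho]]].
  case: H => [[Ep _]|[[E _]|[_ Hp]]].
  - by rewrite Ep in Ho; exact: (nother2x Hxb Ho).
  - by move: Hxb; rewrite E eqxx.
  - exact: (notin_child PP Hb Hp).
have Eb1 : asb (Aop T' b) = false by apply: asbF => -[/nint2b].
have Ex1 := asb_le1 (Aop T' x).
rewrite Ex2 Eb2 Ex3 Eb3 Eb1.
have L2 : cnt (C2op T') (nodes T) < cnt (C2op T) (nodes T).
  apply: (@cnt_lt _ _ _ C) => //.
    move=> n Hn [/(companion2 C Hx Hb Hxb) Hc Hr].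
    case: Hc => [E|Hc].
      by exfalso; apply: Hr; apply: (proj2 (root2 C PP Hx Hb Hxb Hn)); left.
    split => // Hr'; apply: Hr; apply: (proj2 (root2 C PP Hx Hb Hxb Hn)); by right.
  move=> [_ Hr]; apply: Hr; apply: (proj2 (root2 C PP Hx Hb Hxb HC)); by left.
have L3 : cnt (C3op T') (nodes T) <= cnt (C3op T) (nodes T).
  apply: cnt_le => n Hn [/(bud2 C Hx Hb Hn) Hbud /other_premiseE [p [/(par2 C PP Hx Hb Hxb) H Ho]]].
  split => //; apply/other_premiseE.
  case: H => [[_ E]|[[E _]|[_ Hp]]].
  - by move: Hn; rewrite E (negbTE Hb).
  - by move: Hn; rewrite E (negbTE Hx).
  - by exists p; split => //; exact: (proj1 (other2 C Hx Hb (proj1 Hp)) Ho).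
have L1 : cnt (Aop T') (nodes T) <= cnt (Aop T) (nodes T).
  apply: cnt_le => n Hn [/(internal2 C Hx Hb Hn) Hi /subst_premiseE [p [/(par2 C PP Hx Hb Hxb) H Hs]]].
  split => //; apply/subst_premiseE.
  case: H => [[_ E]|[[E _]|[_ Hp]]].
  - by move: Hn; rewrite E (negbTE Hb).
  - by move: Hn; rewrite E (negbTE Hx).
  - by exists p; split => //; exact: (proj1 (subst2 C Hx Hb (proj1 Hp)) Hs).
lia.
Qed.

Lemma op3_M T B b : preproof_tset T -> B \in nodes T -> is_bud T B -> other_premise T B ->
  b \notin nodes T -> M (T3 T B b) < M T.
Proof.
move=> PP HB HBb HoB Hb.
have Nb := nb3 Hb.
rewrite /M; have -> : nodes (T3 T B b) = b :: nodes T by [].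
rewrite !cnt_cons. set T' := T3 T B b.
have E2 : asb (C2op T' b) = false.
  apply: asbF => -[/(companion3 HB HBb Hb) Hc _]; exact: (comp_notin PP Hb Hc).
have E3 : asb (C3op T' b) = false.
  apply: asbF => -[_ /other_premiseE [p [/(par3 HB HBb Hb) H Ho]]].
  case: H => [[Ep _]|Hp].
  - by rewrite Ep in Ho; exact: (nother3B HB Hb Ho).
  - exact: (notin_child PP Hb Hp).
have E1 : asb (Aop T' b) = false by apply: asbF => -[/nint3b].
rewrite E2 E3 E1 !add0n.
have L2 : cnt (C2op T') (nodes T) <= cnt (C2op T) (nodes T).
  apply: cnt_le => n Hn [/(companion3 HB HBb Hb) Hc Hr]; split => // Hr'; apply: Hr.
  exact: (proj2 (root3 HB HBb Hb Hn) Hr').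
have L3 : cnt (C3op T') (nodes T) < cnt (C3op T) (nodes T).
  apply: (@cnt_lt _ _ _ B) => //.
    move=> n Hn [Hbud /other_premiseE [p [/(par3 HB HBb Hb) H Ho]]].
    case: (eqVneq n B) => [E|NB].
      by exfalso; rewrite E in Hbud; exact: (nbud3B HB Hb Hbud).
    split; first exact: (proj1 (bud3 Hb Hn NB) Hbud).
    apply/other_premiseE.
    case: H => [[_ E]|Hp]; first by move: Hn; rewrite E (negbTE Hb).
    exists p; split => //; exact: (proj1 (other3 Hb (proj1 Hp) (nBp3 HBb Hp)) Ho).
  move=> [Hbud _]; exact: (nbud3B HB Hb Hbud).
have L1 : cnt (Aop T') (nodes T) <= cnt (Aop T) (nodes T).
  apply: cnt_le => n Hn [Hi /subst_premiseE [p [/(par3 HB HBb Hb) H Hs]]].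
  case: H => [[_ E]|Hp]; first by move: Hn; rewrite E (negbTE Hb).
  have NpB := nBp3 HBb Hp.
  have Hs' := proj1 (subst3 Hb (proj1 Hp) NpB) Hs.
  case: (eqVneq n B) => [E|NB].
    exfalso; move/other_premiseE: HoB => [q [Hq Hqo]].
    rewrite E in Hp; have Epq := pp_parent_uniq PP Hp Hq; rewrite Epq in Hs'.
    exact: subst_other_excl Hs' Hqo.
  split; first exact: (proj1 (internal3 Hb Hn NB) Hi).
  apply/subst_premiseE; by exists p.
lia.
Qed.

End Measure2.

Section Main.
Variable L : calc.
Implicit Types (T : tset L).

Lemma step_pp T T' : preproof_tset T -> norm_step T T' -> preproof_tset T'.
Proof.
move=> PP [[N [b [HN Hi Hs Hb ->]]]|[[C [x [b [HC Hc Hr [Hx Hb Hxb] ->]]]]|[B [b [HB Hbud Ho Hb ->]]]]].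
- exact: (pp1 PP HN Hb).
- exact: (pp2 PP HC Hx Hb Hxb).
- exact: (pp3 PP HB Hbud Hb).
Qed.

Lemma step_M T T' : preproof_tset T -> norm_step T T' -> M T' < M T.
Proof.
move=> PP [[N [b [HN Hi Hs Hb ->]]]|[[C [x [b [HC Hc Hr [Hx Hb Hxb] ->]]]]|[B [b [HB Hbud Ho Hb ->]]]]].
- exact: (op1_M PP HN Hb Hi Hs).
- exact: (op2_M PP HC Hx Hb Hxb Hc Hr).
- exact: (op3_M PP HB Hbud Ho Hb).
Qed.

Lemma step_root T T' r : preproof_tset T -> is_root T r -> norm_step T T' ->
  is_root T' r /\ lab T' r = lab T r.
Proof.
move=> PP Hr.
have Hrn := proj1 Hr.
move=> [[N [b [HN Hi Hs Hb ->]]]|[[C [x [b [HC Hc Hr' [Hx Hb Hxb] ->]]]]|[B [b [HB Hbud Ho Hb ->]]]]].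
- split; first exact: (proj2 (root1 N PP Hb Hrn) (or_intror Hr)).
  have -> : lab (T1 T N b) r = if r == b then lab T N else lab T r by [].
  by rewrite (negbTE (nb1 Hb Hrn)).
- split; first exact: (proj2 (root2 C PP Hx Hb Hxb Hrn) (or_intror Hr)).
  have -> : lab (T2 T C x b) r = if r == b then lab T C else if r == x then lab T C else lab T r by [].
  by rewrite (negbTE (nb2 Hb Hrn)) (negbTE (nx2 Hx Hrn)).
- split; first exact: (proj2 (root3 HB Hbud Hb Hrn) Hr).
  have -> : lab (T3 T B b) r = if r == b then lab T B else lab T r by [].
  by rewrite (negbTE (nb3 Hb Hrn)).
Qed.

Lemma crt_inv T T' r l : clos_refl_trans (tset L) (@norm_step L) T T' ->
  preproof_tset T /\ is_root T r /\ lab T r = l ->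
  preproof_tset T' /\ is_root T' r /\ lab T' r = l.
Proof.
elim => {T T'} [T T' Hs|T|T1' T2' T3' _ IH1 _ IH2].
- move=> [PP [Hr Hl]]; have [Hr' Hl'] := step_root PP Hr Hs.
  by split; [exact: (step_pp PP Hs) | split => //; rewrite Hl'].
- done.
- by move=> H; apply: IH2; apply: IH1.
Qed.

Lemma norm_exists n T : M T <= n -> preproof_tset T ->
  exists T', clos_refl_trans (tset L) (@norm_step L) T T' /\ normal T'.
Proof.
elim: n T => [|n IH] T HM PP.
  case: (classic (exists T', norm_step T T')) => [[T' Hs]|Hn].
    by have := step_M PP Hs; rewrite leqn0 in HM; rewrite (eqP HM).
  by exists T; split; [apply: rt_refl | move=> T' Hs; apply: Hn; exists T'].
case: (classic (exists T', norm_step T T')) => [[T' Hs]|Hn].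
  have HM' : M T' <= n by have := step_M PP Hs; lia.
  have [T'' [H1 H2]] := IH T' HM' (step_pp PP Hs).
  exists T''; split => //; apply: rt_trans H1; exact: rt_step.
by exists T; split; [apply: rt_refl | move=> T' Hs; apply: Hn; exists T'].
Qed.

Definition fresh (s : seq nat) := (foldr maxn 0 s).+1.
Lemma fresh_notin s : fresh s \notin s.
Proof.
suff H : forall y, y \in s -> y <= foldr maxn 0 s.
  by apply/negP => /H; rewrite /fresh ltnn.
elim: s => //= a s IH y; rewrite inE => /orP [/eqP ->|Hy].
  exact: leq_maxl.
apply: leq_trans (IH _ Hy) _; exact: leq_maxr.
Qed.

Lemma normal_noA T n : normal T -> n \in nodes T -> Aop T n -> False.
Proof.
move=> Hn Hin [Hi Hs]; apply: (Hn (T1 T n (fresh (nodes T)))); left.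
by exists n, (fresh (nodes T)); split => //; exact: fresh_notin.
Qed.

Lemma normal_noC3 T n : normal T -> n \in nodes T -> C3op T n -> False.
Proof.
move=> Hn Hin [Hb Ho]; apply: (Hn (T3 T n (fresh (nodes T)))); right; right.
by exists n, (fresh (nodes T)); split => //; exact: fresh_notin.
Qed.

Lemma chain_last T z mid B : child_chain T z (rcons mid B) -> is_parent T (last z mid) B.
Proof. elim: mid z => [|a m IH] z /=; [by case | move=> [_ H]; exact: IH]. Qed.

Lemma chain_next T z mid B x : child_chain T z (rcons mid B) -> x \in z :: mid ->
  exists y, is_parent T x y /\ (y \in mid \/ y = B).
Proof.
elim: mid z => [|a m IH] z /=.
  move=> [Hp _]; rewrite inE => /eqP ->; exists B; split => //; by right.
move=> [Hp Hc]; rewrite inE => /orP [/eqP ->|Hx].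
  exists a; split => //; left; by rewrite inE eqxx.
have [y [Hy Hy']] := IH a Hc Hx; exists y; split => //.
case: Hy' => [Hym|->]; [left; by rewrite inE Hym orbT | by right].
Qed.

Lemma rb_prop T : preproof_tset T -> normal T ->
  forall l H B, rb_path T l H B ->
    forall x, x \in l ->
      (subst_premise T x <-> x = B) /\ (is_subst_node T x <-> x = H).
Proof.
move=> PP Hnorm l H B [R [mid [El EH HR Hch [HBb Hnb]]]] x Hx.
have HHB : is_parent T H B by rewrite EH; exact: chain_last Hch.
have HBn := pp_child_in PP HHB.
have HsH : is_subst_node T H.
  case: (parent_kind HHB) => // Ho; exfalso; apply: (normal_noC3 Hnorm HBn); split => //.
  by apply/other_premiseE; exists H.
have HsB : subst_premise T B by apply/subst_premiseE; exists H.
have NHB := pp_parent_neq PP HHB.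
have Hmid : forall x, x \in R :: mid -> ~ subst_premise T x /\ (is_subst_node T x -> x = H).
  move=> x' Hx'; have [y [Hy Hy']] := chain_next Hch Hx'.
  have Hin := proj1 Hy; have Hint := parent_internal Hy.
  have NA : ~ subst_premise T x' by move=> Hs; apply: (normal_noA Hnorm Hin); split.
  split => // Hsx; have Hsy : subst_premise T y by apply/subst_premiseE; exists x'.
  case: Hy' => [Hym|Ey].
    exfalso; have Hy2 : y \in R :: mid by rewrite inE Hym orbT.
    have [z [Hz _]] := chain_next Hch Hy2.
    by apply: (normal_noA Hnorm (proj1 Hz)); split => //; exact: parent_internal Hz.
  rewrite Ey in Hy; exact (pp_parent_uniq PP Hy HHB).
move: Hx; rewrite El inE mem_rcons inE => /orP [/eqP Ex|/orP [/eqP Ex|Hxm]].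
- have Hx' : x \in R :: mid by rewrite Ex inE eqxx.
  have [Hm1 Hm2] := Hmid x Hx'.
  split; split => [Hs|E]; [exfalso; exact: Hm1 | by rewrite E | exact: Hm2 | by rewrite E].
- subst x; split; split => // [[th [ch Ha]]|E].
    by move: Ha; rewrite HBb.
  by exfalso; apply: NHB.
- have Hx' : x \in R :: mid by rewrite inE Hxm orbT.
  have [Hm1 Hm2] := Hmid x Hx'.
  split; split => [Hs|E]; [exfalso; exact: Hm1 | by rewrite E | exact: Hm2 | by rewrite E].
Qed.

End Main.

Theorem mainTheorem3 (L : calc) (T0 : tset L) (rho : nat) :
  preproof_tree T0 rho ->
  (exists T, normalises T0 T) /\
  (forall T, normalises T0 T ->
     [/\ preproof_tset T,
         (exists r, is_root T r /\ lab T r = lab T0 rho) &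
         (forall l H B, rb_path T l H B ->
            forall x, x \in l ->
              (subst_premise T x <-> x = B) /\ (is_subst_node T x <-> x = H))]).
Proof.
move=> [PP Hroot _]; split.
  have [T [H1 H2]] := norm_exists (leqnn (M T0)) PP.
  by exists T; split.
move=> T [Hc Hn].
have [PP' [Hr Hl]] := crt_inv Hc (conj PP (conj Hroot (erefl (lab T0 rho)))).
split => //; first by exists rho.
exact: rb_prop.
Qed.
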